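(* Let $X$ be a nonempty set and $\rho:X\times X\to[0,\infty)$ satisfy: (I) $\rho(x,y)=0$ iff $x=y$; (II) $\rho(x,y)=\rho(y,x)$; (VI) for every $a\in X$ and $\varepsilon>0$ there exists $\phi(a,\varepsilon)>0$ such that for all $b,c\in X$, if $\rho(a,b)<\phi(a,\varepsilon)$ and $\rho(c,b)<\phi(a,\varepsilon)$ then $\rho(a,c)<\varepsilon$. Then $(X,\rho)$ is metrizable, i.e. there is a metric $d$ on $X$ such that for every sequence $\{x_n\}$ and $x\in X$, $\lim_n\rho(x_n,x)=0$ iff $\lim_n d(x_n,x)=0$.
   Context: Condition (VI) is equivalent to: (coherence) if $\lim_n\rho(a,a_n)=0$ and $\lim_n\rho(a_n,b_n)=0$ then $\lim_n\rho(a,b_n)=0$; and also to Wilson's condition: for each $a\in X$ and $k>0$ there is $r>0$ such that whenever $\rho(a,b)\ge k$ and $c\in X$ is arbitrary, $\rho(a,c)+\rho(b,c)\ge r$. *)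

(* Defs.v *)
From Stdlib Require Import Reals.
Open Scope R_scope.

Definition is_metric {X : Type} (d : X -> X -> R) : Prop :=
  (forall x y, 0 <= d x y) /\
  (forall x y, d x y = 0 <-> x = y) /\
  (forall x y, d x y = d y x) /\
  (forall x y z, d x z <= d x y + d y z).

Definition condVI {X : Type} (rho : X -> X -> R) : Prop :=
  forall (a : X) (eps : R), eps > 0 ->
    exists phi : R, phi > 0 /\
      forall b c : X, rho a b < phi -> rho c b < phi -> rho a c < eps.

(* Main.v *)
Require Import Defs.
From Stdlib Require Import Reals Lra Lia.
Open Scope R_scope.
Section Comb.
Variables (X : Type) (rho : X -> X -> R).
Hypothesis Hnn : forall x y, (0 <= rho x y).
Hypothesis HI : forall x y, rho x y = 0 <-> x = y.
Hypothesis HII : forall x y, rho x y = rho y x.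
Variable Phi : X -> R -> R.
Hypothesis Phipos : forall a e, (0 < e) -> (0 < Phi a e).
Hypothesis PhiP : forall a e b c, (0 < e) -> (rho a b < Phi a e) ->
   (rho c b < Phi a e) -> (rho a c < e).

Definition ph a e := Rmin e (Phi a e).
Lemma ph_pos a e : (0 < e) -> (0 < ph a e).
Proof. intro H. unfold ph. apply Rmin_glb_lt; auto. Qed.
Lemma ph_le a e : (ph a e <= e).
Proof. apply Rmin_l. Qed.
Lemma phP a e b c : (0 < e) -> (rho a b < ph a e) ->
   (rho c b < ph a e) -> (rho a c < e).
Proof.
intros He H1 H2. apply (PhiP a e b c); auto.
- eapply Rlt_le_trans; [exact H1| apply Rmin_r].
- eapply Rlt_le_trans; [exact H2| apply Rmin_r].
Qed.

Definition sm a e := ph a (ph a e).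

Fixpoint r (n : nat) (a : X) : R :=
  match n with O => 1 | S k => Rmin (/ INR (k + 2)) (sm a (r k a)) end.

Lemma r_pos n a : (0 < r n a).
Proof.
induction n; simpl. lra.
apply Rmin_glb_lt. apply Rinv_0_lt_compat. apply lt_0_INR. lia.
unfold sm. apply ph_pos, ph_pos, IHn.
Qed.

Lemma r_S_le n a : (r (S n) a <= r n a).
Proof.
simpl. eapply Rle_trans; [apply Rmin_r|]. unfold sm.
eapply Rle_trans; apply ph_le.
Qed.

Lemma r_mono n k a : (n <= k)%nat -> (r k a <= r n a).
Proof.
induction 1. lra. eapply Rle_trans; [apply r_S_le| exact IHle].
Qed.

Lemma r_small n a : (r (S n) a <= / INR (n + 2)).
Proof. simpl. apply Rmin_l. Qed.

Definition E (n : nat) (x y : X) : Prop :=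
  exists m, (rho m x < r n m) /\ (rho m y < r n m).

Lemma E_refl n x : E n x x.
Proof.
exists x. assert (rho x x = 0) by (apply HI; reflexivity).
rewrite H. split; apply r_pos.
Qed.

Lemma E_sym n x y : E n x y -> E n y x.
Proof. intros [m [H1 H2]]. exists m. tauto. Qed.

Lemma E_mono n k x y : (n <= k)%nat -> E k x y -> E n x y.
Proof.
intros Hk [m [H1 H2]]. exists m. pose proof (r_mono n k m Hk). split; lra.
Qed.

Lemma chain3 a e y m z : (0 < e) ->
  (rho a y < sm a e) -> (rho m y < sm a e) -> (rho z m < sm a e) ->
  (rho a z < e).
Proof.
intros He H1 H2 H3. unfold sm in *.
assert (Hm : (rho a m < ph a e)).
{ apply (phP a (ph a e) y m); auto. apply ph_pos; auto. }
apply (phP a e m z); auto.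
eapply Rlt_le_trans; [exact H3| apply ph_le].
Qed.

Lemma E_comp n x y z : E (S n) x y -> E (S n) y z -> E n x z.
Proof.
intros [m1 [A1 B1]] [m2 [A2 B2]].
pose proof (r_pos n m1) as P1. pose proof (r_pos n m2) as P2.
assert (S1 : (r (S n) m1 <= sm m1 (r n m1))) by (simpl; apply Rmin_r).
assert (S2 : (r (S n) m2 <= sm m2 (r n m2))) by (simpl; apply Rmin_r).
pose proof (r_S_le n m1). pose proof (r_S_le n m2).
destruct (Rle_dec (r (S n) m2) (r (S n) m1)) as [Hle|Hlt].
- exists m1. split. lra.
  apply (chain3 m1 (r n m1) y m2 z); auto; try lra.
  rewrite HII. lra.
- exists m2. split.
  + apply (chain3 m2 (r n m2) y m1 x); auto; try lra.
    rewrite HII. lra.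
  + lra.
Qed.

Lemma E_small x y n e : (0 < e) -> (/ INR (n + 2) <= ph x e) ->
  E (S n) x y -> (rho x y < e).
Proof.
intros He Hn [m [H1 H2]]. pose proof (r_small n m).
apply (phP x e m y); auto; rewrite HII; lra.
Qed.

Lemma E_center n x y : (rho x y < r n x) -> E n x y.
Proof.
intros H. exists x. assert (rho x x = 0) by (apply HI; reflexivity).
rewrite H0. split; auto. apply r_pos.
Qed.

End Comb.

Lemma arch_inv p : 0 < p -> exists n, / INR (n + 2) <= p.
Proof.
intros Hp. destruct (archimed_cor1 p Hp) as [N [H1 H2]].
exists N. apply Rlt_le. eapply Rle_lt_trans; [|exact H1].
apply Rinv_le_contravar. apply lt_0_INR; lia.
apply le_INR; lia.
Qed.
From HB Require Import structures.
From mathcomp Require Import all_boot all_order all_algebra.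
From mathcomp Require Import all_classical reals topology Rstruct Rstruct_topology.
Import Order.TTheory GRing.Theory Num.Theory.
Section Unif.
Variables (X : Type) (rho : X -> X -> R).
Hypothesis Hnn : forall x y, Rle R0 (rho x y).
Hypothesis HI : forall x y, rho x y = R0 <-> x = y.
Hypothesis HII : forall x y, rho x y = rho y x.
Variable Phi : X -> R -> R.
Hypothesis Phipos : forall a e, Rlt R0 e -> Rlt R0 (Phi a e).
Hypothesis PhiP : forall a e b c, Rlt R0 e -> Rlt (rho a b) (Phi a e) ->
   Rlt (rho c b) (Phi a e) -> Rlt (rho a c) e.

Local Open Scope classical_set_scope.
Local Open Scope relation_scope.

Definition XT : Type := let _ := (Hnn, HI, HII, Phipos, PhiP) in X.

HB.instance Definition _ := gen_eqMixin XT.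
HB.instance Definition _ := gen_choiceMixin XT.

Definition EE (n : nat) : set (XT * XT) := [set p | E X rho Phi n p.1 p.2].

Definition ent : set_system (XT * XT) := filter_from [set: nat] EE.

Lemma ent_filter : Filter ent.
Proof.
apply: filter_from_filter; first by exists 0%N.
move=> i j _ _; exists (maxn i j) => //.
move=> [x y] H; split.
- by apply: (E_mono X rho Phi i (maxn i j)) => //; apply/ssrnat.leP; rewrite leq_maxl.
- by apply: (E_mono X rho Phi j (maxn i j)) => //; apply/ssrnat.leP; rewrite leq_maxr.
Qed.

Lemma ent_diag A : ent A -> diagonal `<=` A.
Proof.
move=> [n _ H] [x y] Hxy; apply: H; move: Hxy; rewrite /diagonal /EE /= => <-.
exact: E_refl.
Qed.

Lemma ent_inv A : ent A -> ent A^-1.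
Proof.
move=> [n _ H]; exists n => // [[x y]] Hxy; apply: H.
exact: E_sym.
Qed.

Lemma ent_split A : ent A -> exists2 B, ent B & B \; B `<=` A.
Proof.
move=> [n _ H]; exists (EE n.+1); first by exists n.+1.
move=> [x z] [y /= H1 H2]; apply: H.
exact: (E_comp X rho HII Phi Phipos PhiP n x y z).
Qed.

HB.instance Definition _ := isUniform.Build XT ent_filter ent_diag ent_inv ent_split.

Lemma cu : countable_uniformity XT.
Proof.
exists (range EE); split.
- exact: card_image_le.
- move=> _ [n _ <-]; by exists n.
- move=> P [n _ H]; exists (EE n) => //; by exists n.
Qed.

End Unif.

Section Metric.
Variables (X : Type) (rho : X -> X -> R).
Hypothesis Hnn : forall x y, Rle R0 (rho x y).
Hypothesis HI : forall x y, rho x y = R0 <-> x = y.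
Hypothesis HII : forall x y, rho x y = rho y x.
Variable Phi : X -> R -> R.
Hypothesis Phipos : forall a e, Rlt R0 e -> Rlt R0 (Phi a e).
Hypothesis PhiP : forall a e b c, Rlt R0 e -> Rlt (rho a b) (Phi a e) ->
   Rlt (rho c b) (Phi a e) -> Rlt (rho a c) e.

Local Open Scope classical_set_scope.
Local Open Scope ring_scope.

Let T := XT X rho Hnn HI HII Phi Phipos PhiP.
Let PM := countable_uniform.type (cu X rho Hnn HI HII Phi Phipos PhiP).
Definition bl (x : X) (e : R) (y : X) : Prop := @ball R PM x e y.

Definition dd (x y : X) : R := inf [set e : R | 0 < e /\ bl x e y].

Lemma dd_ne x y : [set e : R | 0 < e /\ bl x e y] !=set0.
Proof.
exists 2; split => //.
exact: (countable_uniform.countable_uniform_bounded (R:=R) (cu X rho Hnn HI HII Phi Phipos PhiP) x y).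
Qed.

Lemma dd_lb x y : has_lbound [set e : R | 0 < e /\ bl x e y].
Proof. by exists 0 => e [/ltW]. Qed.

Lemma dd_ge0 x y : Rle R0 (dd x y).
Proof.
apply/RleP; apply: lb_le_inf; first exact: dd_ne.
by move=> e [/ltW].
Qed.

Lemma dd_le x y e : Rlt R0 e -> bl x e y -> Rle (dd x y) e.
Proof.
move=> /RltP he hb; apply/RleP; apply: ge_inf; first exact: dd_lb.
by split.
Qed.

Lemma dd_lt x y e : Rlt (dd x y) e -> bl x e y.
Proof.
move=> /RltP he; have [e' [he' hb] e'e] := inf_lt (dd_ne x y) he.
exact: (le_ball (ltW e'e)).
Qed.

Lemma dd_sym x y : dd x y = dd y x.
Proof.
rewrite /dd; congr inf; apply/seteqP; split => e [he hb]; split => //;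
exact: ball_sym.
Qed.

Lemma dd_tri x y z : Rle (dd x z) (dd x y + dd y z).
Proof.
apply/RleP; apply/ler_addgt0Pr => eps heps.
have he2 : 0 < eps / 2 by rewrite divr_gt0.
have [e1 [h1 b1] l1] := inf_adherent he2 (conj (dd_ne x y) (dd_lb x y)).
have [e2 [h2 b2] l2] := inf_adherent he2 (conj (dd_ne y z) (dd_lb y z)).
apply: (le_trans (y := e1 + e2)).
  apply/RleP; apply: dd_le; first by apply/RltP; rewrite addr_gt0.
  exact: (ball_triangle b1 b2).
apply: ltW; rewrite [X in _ < _ + X]splitr addrACA; exact: ltrD.
Qed.

Lemma K1 n : exists2 e, Rlt R0 e & forall x y, bl x e y -> E X rho Phi n x y.
Proof.
have : @entourage PM (EE X rho Hnn HI HII Phi Phipos PhiP n) by exists n.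
rewrite -(@entourage_ballE R PM) => -[e /= he H]; exists e; first exact/RltP.
by move=> x y hb; exact: (H (x, y) hb).
Qed.

Lemma K2 e : Rlt R0 e -> exists n, forall x y, E X rho Phi n x y -> bl x e y.
Proof.
move=> /RltP he.
have : @entourage PM [set xy | ball xy.1 e xy.2].
  by rewrite -(@entourage_ballE R PM); exists e.
move=> [n _ H]; exists n => x y hE; exact: (H (x, y) hE).
Qed.

End Metric.

Section Final.
Local Close Scope ring_scope.
Local Open Scope R_scope.
Variables (X : Type) (rho : X -> X -> R).
Hypothesis Hnn : forall x y, 0 <= rho x y.
Hypothesis HI : forall x y, rho x y = 0 <-> x = y.
Hypothesis HII : forall x y, rho x y = rho y x.
Variable Phi : X -> R -> R.
Hypothesis Phipos : forall a e, 0 < e -> 0 < Phi a e.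
Hypothesis PhiP : forall a e b c, 0 < e -> rho a b < Phi a e ->
   rho c b < Phi a e -> rho a c < e.

Let d := dd X rho Hnn HI HII Phi Phipos PhiP.

Lemma rho_small x y : (forall n, E X rho Phi n x y) -> x = y.
Proof.
intros H. apply HI. destruct (Rle_lt_or_eq_dec 0 (rho x y) (Hnn x y)) as [Hlt|Heq]; [|auto].
exfalso. destruct (arch_inv (ph X Phi x (rho x y)) (ph_pos X Phi Phipos x _ Hlt)) as [n Hn].
pose proof (E_small X rho HII Phi PhiP x y n (rho x y) Hlt Hn (H (S n))). lra.
Qed.

Lemma d_metric : is_metric d.
Proof.
split; [|split; [|split]].
- intros; apply dd_ge0.
- intros x y; split.
  + intros H0. apply rho_small. intro n.
    destruct (K1 X rho Hnn HI HII Phi Phipos PhiP n) as [e He Hb].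
    apply Hb. apply dd_lt. fold d. lra.
  + intros <-. apply Rle_antisym; [|apply dd_ge0].
    apply Rnot_lt_le. intro Hlt.
    assert (Hd : 0 < d x x / 2) by lra.
    pose proof (dd_le X rho Hnn HI HII Phi Phipos PhiP x x (d x x / 2) Hd).
    assert (d x x <= d x x / 2). { apply H. unfold bl. apply ballxx. apply/RltP. exact Hd. }
    lra.
- intros; apply dd_sym.
- intros; apply dd_tri.
Qed.

Lemma d_conv (s : nat -> X) (x : X) :
  Un_cv (fun n => rho (s n) x) 0 <-> Un_cv (fun n => d (s n) x) 0.
Proof.
split; intros H eps Heps; unfold d in *.
- assert (He2 : 0 < eps / 2) by lra.
  destruct (K2 X rho Hnn HI HII Phi Phipos PhiP (eps / 2) He2) as [n0 Hn0].
  destruct (H (r X Phi n0 x) (r_pos X Phi Phipos n0 x)) as [N HN].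
  exists N. intros k Hk. specialize (HN k Hk).
  unfold R_dist in *. rewrite Rminus_0_r in HN. rewrite Rminus_0_r.
  pose proof (dd_ge0 X rho Hnn HI HII Phi Phipos PhiP (s k) x).
  rewrite (Rabs_pos_eq _ (Hnn _ _)) in HN.
  rewrite (Rabs_pos_eq _ H0).
  assert (d (s k) x <= eps / 2); [|unfold d in *; lra].
  apply dd_le; auto. apply Hn0. apply E_sym. apply E_center; auto.
  rewrite HII; auto.
- destruct (arch_inv (ph X Phi x eps) (ph_pos X Phi Phipos x _ Heps)) as [n Hn].
  destruct (K1 X rho Hnn HI HII Phi Phipos PhiP (S n)) as [e He Hb].
  destruct (H e He) as [N HN].
  exists N. intros k Hk. specialize (HN k Hk).
  unfold R_dist in *. rewrite Rminus_0_r in HN. rewrite Rminus_0_r.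
  pose proof (dd_ge0 X rho Hnn HI HII Phi Phipos PhiP (s k) x).
  rewrite (Rabs_pos_eq _ H0) in HN.
  rewrite (Rabs_pos_eq _ (Hnn _ _)).
  rewrite HII. apply (E_small X rho HII Phi PhiP x (s k) n eps Heps Hn).
  apply E_sym. apply Hb. apply dd_lt. exact HN.
Qed.

End Final.

Theorem mainTheorem9 (X : Type) (x0 : X) (rho : X -> X -> R)
  (Hnn : forall x y, 0 <= rho x y)
  (HI : forall x y, rho x y = 0 <-> x = y)
  (HII : forall x y, rho x y = rho y x)
  (HVI : condVI rho) :
  exists d : X -> X -> R, is_metric d /\
    forall (s : nat -> X) (x : X),
      Un_cv (fun n => rho (s n) x) 0 <-> Un_cv (fun n => d (s n) x) 0.
Proof.
assert (Hex : forall a e, exists phi, 0 < e -> 0 < phi /\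
   forall b c, rho a b < phi -> rho c b < phi -> rho a c < e).
{ intros a e. destruct (Rlt_dec 0 e) as [He|He].
  - destruct (HVI a e He) as [phi Hp]. exists phi; auto.
  - exists 1. intro; contradiction. }
pose (Phi := fun a e => proj1_sig (cid (Hex a e))).
assert (HPhi : forall a e, 0 < e -> 0 < Phi a e /\
   forall b c, rho a b < Phi a e -> rho c b < Phi a e -> rho a c < e).
{ intros a e He. unfold Phi. destruct (cid (Hex a e)) as [p Hp].
  simpl. auto. }
assert (Phipos : forall a e, 0 < e -> 0 < Phi a e) by (intros; apply HPhi; auto).
assert (PhiP : forall a e b c, 0 < e -> rho a b < Phi a e ->
   rho c b < Phi a e -> rho a c < e) by (intros a e b c He; apply (HPhi a e He)).
exists (dd X rho Hnn HI HII Phi Phipos PhiP). split.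
- apply d_metric.
- intros s x. apply d_conv.
Qed.
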